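(* Let $(X,Y)$ be any one of the pairs $(F,L)$, $(L,F)$, $(J,j)$, $(j,J)$, $(P,Q)$, $(Q,P)$. Then for all integers $a,b,c,d,e,m$, $$(X_{d-a}Y_{e-b}-X_{e-a}Y_{d-b})X_{m-c}=(X_{d-c}Y_{e-b}-X_{e-c}Y_{d-b})X_{m-a}+(X_{d-a}X_{e-c}-X_{e-a}X_{d-c})Y_{m-b}.$$
   Context: All sequences are indexed by $n\in\mathbb Z$. Fibonacci numbers $F_n$ and Lucas numbers $L_n$: $F_n=F_{n-1}+F_{n-2}$, $L_n=L_{n-1}+L_{n-2}$ for all $n\in\mathbb Z$, with $F_0=0,F_1=1,L_0=2,L_1=1$ (so $F_{-n}=(-1)^{n-1}F_n$, $L_{-n}=(-1)^nL_n$). Jacobsthal numbers $J_n$ and Jacobsthal–Lucas numbers $j_n$: $J_n=J_{n-1}+2J_{n-2}$, $j_n=j_{n-1}+2j_{n-2}$ for all $n\in\mathbb Z$, with $J_0=0,J_1=1,j_0=2,j_1=1$ (so $J_{-n}=(-1)^{n-1}2^{-n}J_n$, $j_{-n}=(-1)^n2^{-n}j_n$, rational for negative index). Pell numbers $P_n$ and Pell–Lucas numbers $Q_n$: $P_n=2P_{n-1}+P_{n-2}$, $Q_n=2Q_{n-1}+Q_{n-2}$ for all $n\in\mathbb Z$, with $P_0=0,P_1=1,Q_0=2,Q_1=2$ (so $P_{-n}=(-1)^{n-1}P_n$, $Q_{-n}=(-1)^nQ_n$). *)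

(* Defs.v *)
From HB Require Import structures.
From mathcomp Require Import all_boot all_order all_algebra.
Set Implicit Arguments. Unset Strict Implicit. Unset Printing Implicit Defensive.
Import Order.TTheory GRing.Theory Num.Theory.
Local Open Scope ring_scope.

(* Forward iteration: fw n = (u_n, u_(n+1)) for u_n = p u_(n-1) + q u_(n-2),
   u_0 = a, u_1 = b. *)
Fixpoint fw (p q a b : rat) (n : nat) : rat * rat :=
  match n with
  | O => (a, b)
  | S k => let: (x, y) := fw p q a b k in (y, p * y + q * x)
  end.

(* Backward iteration: bw n = (u_(-n), u_(-n+1)), using
   u_(k-2) = (u_k - p u_(k-1)) / q. *)
Fixpoint bw (p q a b : rat) (n : nat) : rat * rat :=
  match n with
  | O => (a, b)
  | S k => let: (x, y) := bw p q a b k in ((y - p * x) / q, x)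
  end.

Definition rec2 (p q a b : rat) (z : int) : rat :=
  match z with
  | Posz n => (fw p q a b n).1
  | Negz n => (bw p q a b n.+1).1   (* Negz n = -(n+1) *)
  end.

Definition Fib   : int -> rat := rec2 1 1 0 1.
Definition Luc   : int -> rat := rec2 1 1 2 1.
Definition Jac   : int -> rat := rec2 1 2 0 1.
Definition JacL  : int -> rat := rec2 1 2 2 1.
Definition Pell  : int -> rat := rec2 2 1 0 1.
Definition PellL : int -> rat := rec2 2 1 2 2.

(* Main.v *)
Require Import Defs.
From HB Require Import structures.
From mathcomp Require Import all_boot all_order all_algebra.
From mathcomp Require Import ring zify.
Import GRing.Theory.
Local Open Scope ring_scope.

Definition sol (p q : rat) (s : int -> rat) :=
  forall z : int, s (z + 2) = p * s (z + 1) + q * s z.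

Lemma fwS1 p q a b k : (fw p q a b k.+1).1 = (fw p q a b k).2.
Proof. by rewrite /=; case: (fw p q a b k). Qed.
Lemma fwS2 p q a b k :
  (fw p q a b k.+1).2 = p * (fw p q a b k).2 + q * (fw p q a b k).1.
Proof. by rewrite /=; case: (fw p q a b k). Qed.
Lemma bwS1 p q a b k :
  (bw p q a b k.+1).1 = ((bw p q a b k).2 - p * (bw p q a b k).1) / q.
Proof. by rewrite /=; case: (bw p q a b k). Qed.
Lemma bwS2 p q a b k : (bw p q a b k.+1).2 = (bw p q a b k).1.
Proof. by rewrite /=; case: (bw p q a b k). Qed.

Lemma rec2_sol p q a b : q != 0 -> sol p q (rec2 p q a b).
Proof.
move=> q0 [n|[|[|n]]].
- have -> : Posz n + 2 = Posz n.+2 by lia.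
  have -> : Posz n + 1 = Posz n.+1 by lia.
  by rewrite /rec2 !fwS1 fwS2.
- have -> : Negz 0 + 2 = Posz 1 by lia.
  have -> : Negz 0 + 1 = Posz 0 by lia.
  rewrite /rec2 fwS1 bwS1 /=. field. exact: q0.
- have -> : Negz 1 + 2 = Posz 0 by lia.
  have -> : Negz 1 + 1 = Negz 0 by lia.
  rewrite /rec2 [(bw _ _ _ _ 2).1]bwS1 bwS2 bwS1 /=. field. exact: q0.
- have -> : Negz n.+2 + 2 = Negz n by lia.
  have -> : Negz n.+2 + 1 = Negz n.+1 by lia.
  rewrite /rec2 [(bw _ _ _ _ n.+3).1]bwS1 bwS2. field. exact: q0.
Qed.

Lemma sol_uniq p q s t : q != 0 -> sol p q s -> sol p q t ->
  s 0 = t 0 -> s 1 = t 1 -> forall z, s z = t z.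
Proof.
move=> q0 Hs Ht h0 h1.
have P : forall n : nat, s (Posz n) = t (Posz n) /\ s (Posz n + 1) = t (Posz n + 1).
  elim=> [|n [IH1 IH2]]; first by split.
  have E : Posz n.+1 = Posz n + 1 by lia.
  have E2 : Posz n.+1 + 1 = Posz n + 2 by lia.
  by rewrite E2 Hs Ht IH1 IH2 E.
have N : forall n : nat, s (- Posz n) = t (- Posz n) /\ s (- Posz n + 1) = t (- Posz n + 1).
  elim=> [|n [IH1 IH2]]; first by rewrite oppr0 add0r.
  have E : - Posz n.+1 + 1 = - Posz n by lia.
  rewrite E; split => //.
  have Es := Hs (- Posz n.+1). have Et := Ht (- Posz n.+1).
  have E2 : - Posz n.+1 + 2 = - Posz n + 1 by lia.
  rewrite E2 E in Es Et.
  rewrite IH1 IH2 Et in Es.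
  have : q * s (- Posz n.+1) = q * t (- Posz n.+1).
    by apply: (addrI (p * t (- Posz n))); rewrite Es.
  by move/(mulfI q0).
case=> n; first by case: (P n).
by rewrite NegzE; case: (N n.+1).
Qed.

Lemma rep p q s a : q != 0 -> sol p q s -> forall n,
  s (n - a) = s (0 - a) * rec2 p q 1 0 n + s (1 - a) * rec2 p q 0 1 n.
Proof.
move=> q0 Hs n.
apply: (@sol_uniq p q (fun n => s (n - a))
  (fun n => s (0 - a) * rec2 p q 1 0 n + s (1 - a) * rec2 p q 0 1 n) q0).
- move=> z /=. have E1 : z + 2 - a = (z - a) + 2 by ring.
  have E2 : z + 1 - a = (z - a) + 1 by ring.
  by rewrite E1 E2 Hs.
- move=> z /=. rewrite !rec2_sol //. ring.
- by rewrite /= /rec2 /=; ring.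
- by rewrite /= /rec2 /=; ring.
Qed.

Lemma gen p q X Y : q != 0 -> sol p q X -> sol p q Y ->
  forall a b c d e m : int,
    (X (d - a) * Y (e - b) - X (e - a) * Y (d - b)) * X (m - c) =
    (X (d - c) * Y (e - b) - X (e - c) * Y (d - b)) * X (m - a)
    + (X (d - a) * X (e - c) - X (e - a) * X (d - c)) * Y (m - b).
Proof.
move=> q0 HX HY a b c d e m.
rewrite (rep _ _ _ a q0 HX d) (rep _ _ _ a q0 HX e) (rep _ _ _ a q0 HX m).
rewrite (rep _ _ _ c q0 HX d) (rep _ _ _ c q0 HX e) (rep _ _ _ c q0 HX m).
rewrite (rep _ _ _ b q0 HY d) (rep _ _ _ b q0 HY e) (rep _ _ _ b q0 HY m).
ring.
Qed.

Theorem theorem1 (X Y : int -> rat) :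
  (X = Fib /\ Y = Luc) \/ (X = Luc /\ Y = Fib) \/
  (X = Jac /\ Y = JacL) \/ (X = JacL /\ Y = Jac) \/
  (X = Pell /\ Y = PellL) \/ (X = PellL /\ Y = Pell) ->
  forall a b c d e m : int,
    (X (d - a) * Y (e - b) - X (e - a) * Y (d - b)) * X (m - c) =
    (X (d - c) * Y (e - b) - X (e - c) * Y (d - b)) * X (m - a)
    + (X (d - a) * X (e - c) - X (e - a) * X (d - c)) * Y (m - b).
Proof.
case=> [[->->]|[[->->]|[[->->]|[[->->]|[[->->]|[->->]]]]]];
  rewrite /Fib /Luc /Jac /JacL /Pell /PellL;
  (eapply gen; [ | apply: rec2_sol | apply: rec2_sol ]); by [].
Qed.
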